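(* Let $\alpha\in(0,1)$, let $X_1,X_2,\dots$ be i.i.d. real random variables with distribution function $F$, and assume $F$ has a unique $\alpha$-quantile $q_\alpha=F^{-1}(\alpha)$. Let $F_k$ be the empirical distribution function of $X_1,\dots,X_k$ and $F_k^{-1}(\alpha):=\inf\{t:F_k(t)\ge\alpha\}$. Put $d(x):=\min\{F(q_\alpha+x)-\alpha,\ \alpha-F(q_\alpha-x)\}$. Then $d(x)>0$ for all $x>0$ and for every $n\in\mathbb N$, $$\mathbb P\Big(\sup_{k\ge n}|F_k^{-1}(\alpha)-q_\alpha|>x\Big)\le 2e^{-2n\,d(x)^2}\qquad\forall x>0.$$
   Context: The $\alpha$-quantiles of $F$ are the points $q$ with $F(q-)\le\alpha\le F(q)$, where $F(q-)$ denotes the left limit of $F$ at $q$. *)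

(* Defs.v *)
From HB Require Import structures.
From mathcomp Require Import all_boot all_order all_algebra.
From mathcomp Require Import all_classical all_reals all_analysis.
Set Implicit Arguments. Unset Strict Implicit. Unset Printing Implicit Defensive.
Import Order.TTheory GRing.Theory Num.Theory.
Import numFieldNormedType.Exports.
Local Open Scope classical_set_scope.
Local Open Scope ring_scope.

Section defs.
Context {d : measure_display} {T : measurableType d} {R : realType}
  (P : probability T R).

(* Mutual independence of a sequence of real random variables: for every n
   and Borel sets B_0,...,B_{n-1}, P(/\_i {X_i in B_i}) = prod_i P(X_i in B_i).
   (Taking B_i = setT recovers every finite subfamily.) *)
Definition mutually_independent (X : nat -> {RV P >-> R}) : Prop :=
  forall (n : nat) (B : nat -> set R), (forall i, measurable (B i)) ->
    P (\big[setI/setT]_(i < n) (X i @^-1` B i)) =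
    (\prod_(i < n) P (X i @^-1` B i))%E.

Definition identically_distributed (X : nat -> {RV P >-> R}) : Prop :=
  forall (i : nat) (A : set R), measurable A ->
    distribution P (X i) A = distribution P (X 0) A.

Definition iid (X : nat -> {RV P >-> R}) : Prop :=
  mutually_independent X /\ identically_distributed X.

Definition distfun (Y : {RV P >-> R}) (t : R) : R := fine (cdf Y t).

Definition left_lim (F : R -> R) (q : R) : R := lim (F x @[x --> q^'-]).

Definition is_quantile (F : R -> R) (alpha q : R) : Prop :=
  left_lim F q <= alpha <= F q.

(* empirical distribution function of X_1,...,X_k (indices 0..k-1) *)
Definition empirical_df (X : nat -> {RV P >-> R}) (k : nat) (w : T) (t : R) : R :=
  (\sum_(i < k) (((X i w <= t)%R)%:R : R)) / k%:R.

Definition empirical_quantile (X : nat -> {RV P >-> R}) (k : nat) (alpha : R)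
  (w : T) : R :=
  inf [set t | alpha <= empirical_df X k w t].

End defs.

(* Main.v *)
Require Import Defs.
From HB Require Import structures.
From mathcomp Require Import all_boot all_order all_algebra.
From mathcomp Require Import all_classical all_reals all_analysis.
Import Order.TTheory GRing.Theory Num.Theory.
Import numFieldNormedType.Exports.
Local Open Scope classical_set_scope.
Local Open Scope ring_scope.

From mathcomp Require Import ring lra.
Set Implicit Arguments. Unset Strict Implicit.
Lemma mono_nincr (R : realType) (f df : R -> R) (a b : R) :
  (forall x, is_derive x (1:R) f (df x)) -> (forall x, a <= x <= b -> df x <= 0) ->
  a <= b -> f b <= f a.
Proof.
move=> fd dle ab.
have cf : continuous f.
  move=> x; apply/differentiable_continuous/derivable1_diffP.
  by have [] := fd x.
apply: (@ler0_derive1_nincr _ f a b) => //.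
- move=> x; rewrite in_itv/= => /andP[ax xb].
  by rewrite derive1E derive_val; apply: dle; rewrite !ltW.
- by apply: continuous_subspaceT.
Qed.
Definition hD (R : realType) (p t : R) := p + (1 - p) * expR t.

Lemma hD_gt0 (R : realType) (p t : R) : 0 <= p <= 1 -> 0 < hD p t.
Proof.
move=> /andP[p0 p1].
rewrite /hD; have e0 := expR_gt0 t.
have [->|pn0] := eqVneq p 0; first by rewrite subr0 mul1r add0r.
apply: ltr_pwDl; first by rewrite lt_def pn0.
by apply: mulr_ge0; [rewrite subr_ge0|exact: ltW].
Qed.
Lemma is_derive_hD (R : realType) (p t : R) : is_derive t (1:R) (hD p) ((1 - p) * expR t).
Proof. by rewrite /hD; apply: trigger_derive; rewrite add0r mul1r. Qed.
Definition hrho (R : realType) (p t : R) := p - p * (hD p t)^-1 - 4^-1 * t.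
Lemma is_derive_hrho (R : realType) (p t : R) : 0 <= p <= 1 ->
  is_derive t (1:R) (hrho p) (p * (1 - p) * expR t / (hD p t)^+2 - 1/4).
Proof.
move=> p01.
have h0 : hD p t != 0 by rewrite gt_eqF // hD_gt0.
have hv := is_deriveV h0 (is_derive_hD p t).
have := is_deriveB (is_deriveB (is_derive_cst p t 1) (is_deriveZ p hv)) (is_deriveZ (4^-1) (is_derive_id t 1)).
set f := (X in is_derive _ _ X _ -> _).
have -> : hrho p = f by apply/funext => y; rewrite /f /hrho /=.
move=> H; apply: is_derive_eq H _.
rewrite /GRing.scale /=.
by field.
Qed.
Definition he1 (R : realType) (p t : R) := (p - 1) * t - 8^-1 * (t * t).
Definition he2 (R : realType) (p t : R) := p * t - 8^-1 * (t * t).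
Definition hG (R : realType) (p t : R) := p * expR (he1 p t) + (1 - p) * expR (he2 p t).
Lemma is_derive_hG (R : realType) (p t : R) : 0 <= p <= 1 ->
  is_derive t (1:R) (hG p) (expR (he1 p t) * (hD p t * hrho p t)).
Proof.
move=> p01.
have d1 : is_derive t (1:R) (he1 p) ((p - 1) - 4^-1 * t).
  by rewrite /he1; apply: trigger_derive; rewrite /GRing.scale /=; field.
have d2 : is_derive t (1:R) (he2 p) (p - 4^-1 * t).
  by rewrite /he2; apply: trigger_derive; rewrite /GRing.scale /=; field.
have c1 := is_derive1_comp (is_derive_expR (he1 p t)) d1.
have c2 := is_derive1_comp (is_derive_expR (he2 p t)) d2.
have := is_deriveD (is_deriveZ p c1) (is_deriveZ (1 - p) c2).
set f := (X in is_derive _ _ X _ -> _).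
have -> : hG p = f by apply/funext => y; rewrite /f /hG /=.
move=> H; apply: is_derive_eq H _.
rewrite /GRing.scale /=.
have -> : he2 p t = he1 p t + t by rewrite /he1 /he2; ring.
rewrite (expRD (he1 p t) t) /hrho.
have h0 : hD p t != 0 by rewrite gt_eqF // hD_gt0.
move: h0; rewrite /hD => h0.
set E := expR (he1 p t); set e := expR t.
by field.
Qed.
Lemma mono_ndecr (R : realType) (f df : R -> R) (a b : R) :
  (forall x, is_derive x (1:R) f (df x)) -> (forall x, a <= x <= b -> 0 <= df x) ->
  a <= b -> f a <= f b.
Proof.
move=> fd dge ab.
have := @mono_nincr R (fun x => - f x) (fun x => - df x) a b.
rewrite lerN2; apply => // x.
by move=> /dge; rewrite oppr_le0.
Qed.
Lemma hrho0 (R : realType) (p : R) : hrho p 0 = 0.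
Proof. by rewrite /hrho /hD expR0 mulr1 (addrC p (1 - p)) subrK invr1 mulr1 mulr0 !subrr. Qed.
Lemma hrho_sign (R : realType) (p t : R) : 0 <= p <= 1 ->
  (0 <= t -> hrho p t <= 0) /\ (t <= 0 -> 0 <= hrho p t).
Proof.
move=> p01.
have dle : forall x, p * (1 - p) * expR x / (hD p x)^+2 - 1/4 <= 0.
  move=> x; rewrite subr_le0.
  have h0 : 0 < hD p x by apply: hD_gt0.
  rewrite ler_pdivrMr ?exprn_gt0 //.
  rewrite /hD.
  set e := expR x.
  have : 0 <= (p - (1 - p) * e)^+2 by apply: sqr_ge0.
  move=> H. 
  nra.
split => ht.
- by rewrite -(hrho0 p); apply: (mono_nincr (fun x => is_derive_hrho x p01)).
- by rewrite -(hrho0 p); apply: (mono_nincr (fun x => is_derive_hrho x p01)).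
Qed.
Lemma hG0 (R : realType) (p : R) : hG p 0 = 1.
Proof. by rewrite /hG /he1 /he2 !mulr0 subr0 expR0 !mulr1 addrC subrK. Qed.
Lemma hG_le1 (R : realType) (p t : R) : 0 <= p <= 1 -> hG p t <= 1.
Proof.
move=> p01; rewrite -(hG0 p).
have dG := fun x => is_derive_hG x p01.
have [t0|t0] := leP 0 t.
- apply: (mono_nincr dG) => // x /andP[x0 _].
  rewrite pmulr_rle0 ?expR_gt0 // pmulr_rle0 ?hD_gt0 //.
  by have [+ _] := hrho_sign x p01; apply.
- apply: (mono_ndecr dG) (ltW t0) => x /andP[_ x0].
  rewrite pmulr_rge0 ?expR_gt0 // pmulr_rge0 ?hD_gt0 //.
  by have [_ +] := hrho_sign x p01; apply.
Qed.
Lemma hoeffding_bern (R : realType) (p l : R) : 0 <= p <= 1 ->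
  p * expR (l * (p - 1)) + (1 - p) * expR (l * p) <= expR (8^-1 * (l * l)).
Proof.
move=> p01; have := hG_le1 l p01.
rewrite /hG /he1 /he2 => H.
have e0 := expR_gt0 (8^-1 * (l * l)).
have E1 : expR (l * (p - 1)) = expR ((p - 1) * l - 8^-1 * (l * l)) * expR (8^-1 * (l * l)).
  by rewrite -expRD subrK mulrC.
have E2 : expR (l * p) = expR (p * l - 8^-1 * (l * l)) * expR (8^-1 * (l * l)).
  by rewrite -expRD subrK mulrC.
rewrite E1 E2 [p * (_ * _)]mulrA [(1 - p) * (_ * _)]mulrA -mulrDl.
by rewrite -[X in _ <= X]mul1r ler_pM2r.
Qed.
Fixpoint allbits (n : nat) : seq (seq bool) :=
  if n is n'.+1 then [seq true :: b | b <- allbits n'] ++ [seq false :: b | b <- allbits n']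
  else [:: [::]].
Definition wt (R : realType) (p : R) (b : seq bool) : R :=
  \prod_(x <- b) (if x then p else 1 - p).
Fixpoint hit (R : realType) (phi : bool -> R) (L s : R) (b : seq bool) : bool :=
  if b is x :: b' then (L <= s) || hit phi L (s + phi x) b' else (L <= s).
Lemma sum_allbits (R : realType) (n : nat) (f : seq bool -> R) :
  \sum_(b <- allbits n.+1) f b = \sum_(b <- allbits n) f (true :: b) + \sum_(b <- allbits n) f (false :: b).
Proof. by rewrite /= big_cat !big_map. Qed.
Lemma sum_wt (R : realType) (p : R) n : \sum_(b <- allbits n) wt p b = 1.
Proof.
elim: n => [|n IH]; first by rewrite /= big_seq1 /wt big_nil.
rewrite sum_allbits /wt.
under eq_bigr do rewrite big_cons.
under [X in _ + X]eq_bigr do rewrite big_cons.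
by rewrite -!mulr_sumr -!/(wt _ _) IH !mulr1 addrC subrK.
Qed.
Lemma ville (R : realType) (p : R) (phi : bool -> R) (L : R) :
  0 <= p <= 1 -> p * expR (phi true) + (1 - p) * expR (phi false) <= 1 ->
  forall n s, \sum_(b <- allbits n) wt p b * (hit phi L s b)%:R <= expR (s - L).
Proof.
move=> /andP[p0 p1] hph; elim => [|n IH] s.
  rewrite /= big_seq1 /wt big_nil mul1r /=.
  have [Ls|] := leP L s; last by rewrite expR_ge0.
  by rewrite (le_trans _ (expR_ge1Dx _)) // lerDl subr_ge0.
rewrite sum_allbits /=.
have [Ls|Ls] := leP L s.
  under eq_bigr do rewrite mulr1.
  under [X in _ + X]eq_bigr do rewrite mulr1.
  rewrite -sum_allbits sum_wt.
  by rewrite (le_trans _ (expR_ge1Dx _)) // lerDl subr_ge0.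
rewrite /=.
under eq_bigr do rewrite /wt big_cons /= -mulrA.
under [X in _ + X]eq_bigr do rewrite /wt big_cons /= -mulrA.
rewrite -!mulr_sumr.
apply: (le_trans (lerD (ler_wpM2l p0 (IH _)) (ler_wpM2l _ (IH _)))); first by rewrite subr_ge0.
rewrite !(addrC s) -!addrA !expRD !mulrA -mulrDl.
rewrite mulrC ler_pM2l ?expR_gt0 // -mulrDl.
by rewrite -[X in _ <= X]mul1r ler_pM2r ?expR_gt0.
Qed.
Lemma ll_cvg (R' : realType) (F : R' -> R') q : {homo F : x y / x <= y} ->
  cvg (F x @[x --> q^'-]).
Proof.
move=> ndF; apply: nondecreasing_at_left_is_cvgr.
  by apply: nearW => x y z _ _; exact: ndF.
apply: nearW => x; exists (F q) => _ [y /= + <-]; rewrite in_itv /= => /andP[_ /ltW].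
exact: ndF.
Qed.
Lemma left_lim_le (R' : realType) (F : R' -> R') q : {homo F : x y / x <= y} ->
  left_lim F q <= F q.
Proof.
move=> ndF; apply: limr_le; first exact: ll_cvg.
by near=> x; apply: ndF; near: x; exact: nbhs_left_le.
Unshelve. all: by end_near.
Qed.
Lemma le_left_lim (R' : realType) (F : R' -> R') y q : {homo F : x y / x <= y} ->
  y < q -> F y <= left_lim F q.
Proof.
move=> ndF yq; apply: limr_ge; first exact: ll_cvg.
by near=> x; apply: ndF; near: x; exact: nbhs_left_ge.
Unshelve. all: by end_near.
Qed.
Lemma dd_pos (R' : realType) (F : R' -> R') alpha qa x : {homo F : x y / x <= y} ->
  (forall q, is_quantile F alpha q <-> q = qa) -> 0 < x ->
  0 < F (qa + x) - alpha /\ 0 < alpha - F (qa - x).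
Proof.
move=> ndF uq x0.
have /andP[Q1 Q2] := (uq qa).2 erefl.
split; rewrite subr_gt0 ltNge; apply/negP => H.
- have : is_quantile F alpha (qa + x).
    apply/andP; split; first exact: le_trans (left_lim_le _ ndF) H.
    by apply: le_trans Q2 _; apply: ndF; rewrite lerDl ltW.
  move=> /uq /eqP; rewrite -subr_eq0 addrC addKr => /eqP x00.
  by move: x0; rewrite x00 ltxx.
- have : is_quantile F alpha (qa - x / 2).
    apply/andP; split.
      apply: le_trans (left_lim_le _ ndF) _.
      apply: le_trans (le_left_lim ndF _) Q1.
      by rewrite ltrBlDr ltrDl divr_gt0.
    apply: le_trans H _; apply: ndF; rewrite lerB // ler_pdivrMr // ler_pMr //.
    by rewrite ler1n.
  move=> /uq /eqP; rewrite -subr_eq0 addrC addKr oppr_eq0 mulf_eq0 invr_eq0 => /orP[] /eqP x00.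
    by move: x0; rewrite x00 ltxx.
  by move/eqP: x00; rewrite pnatr_eq0.
Qed.
Section prob.
Context {d : measure_display} {T : measurableType d} {R : realType} (P : probability T R) (X : nat -> {RV P >-> R}).
Definition bits (c : R) (N : nat) (w : T) : seq bool := [seq (X i w <= c) | i <- iota 0 N].
Definition Bset (c : R) (x : bool) : set R := if x then [set` `]-oo, c]] else [set` `]c, +oo[].
Lemma mBset c x : measurable (Bset c x).
Proof. by case: x; exact: measurable_itv. Qed.
Lemma bitsE c N b : size b = N -> [set w | bits c N w = b] = \big[setI/setT]_(i < N) (X i @^-1` Bset c (nth false b i)).
Proof.
move=> sb; rewrite -(bigcap_mkord N (fun i => X i @^-1` Bset c (nth false b i))).
apply/seteqP; split => w /=.
- move=> <- i /= iN.
  rewrite /bits (nth_map 0) ?size_iota // nth_iota //= add0n.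
  rewrite /Bset; case: leP => /= h; rewrite in_itv /= ?andbT //.
- move=> H; apply: (@eq_from_nth _ false); rewrite ?size_map ?size_iota //.
  move=> i iN; rewrite (nth_map 0) ?size_iota // nth_iota //= add0n.
  have := H i iN; rewrite /Bset; case: nth => /=; rewrite in_itv /= ?andbT //.
  by case: leP.
Qed.
Definition pr (c : R) : R := fine (P (X 0 @^-1` [set` `]-oo, c]])).
Lemma pr01 c : 0 <= pr c <= 1.
Proof.
rewrite /pr; apply/andP; split.
  by apply: fine_ge0; apply: measure_ge0.
rewrite -lee_fin fineK ?fin_num_measure //; last exact: measurable_funPTI.
by apply: probability_le1; exact: measurable_funPTI.
Qed.
Lemma PBset (hI : iid X) c x i : P (X i @^-1` Bset c x) = (if x then pr c else 1 - pr c)%:E.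
Proof.
have E0 : P (X i @^-1` [set` `]-oo, c]]) = (pr c)%:E.
  have := hI.2 i _ (measurable_itv `]-oo, c]).
  rewrite /distribution /pushforward /= => ->.
  by rewrite /pr fineK ?fin_num_measure //; exact: measurable_funPTI.
case: x => /=; first exact: E0.
rewrite -setCitvl preimage_setC probability_setC ?E0 //.
exact: (measurable_funPTI (X i) (measurable_itv _)).
Qed.
Lemma prob_bits (hI : iid X) c b : P [set w | bits c (size b) w = b] = (wt (pr c) b)%:E.
Proof.
rewrite bitsE // (hI.1 (size b) (fun i => Bset c (nth false b i))); last by move=> i; exact: mBset.
under eq_bigr do rewrite PBset //.
rewrite prodEFin /wt; congr (_%:E).
rewrite (big_nth false) big_mkord.
by apply: eq_bigr => i _.
Qed.
Lemma size_bits c N w : size (bits c N w) = N.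
Proof. by rewrite size_map size_iota. Qed.
Lemma allbits_size N b : b \in allbits N -> size b = N.
Proof.
elim: N b => [|N IH] b /=; first by rewrite inE => /eqP ->.
by rewrite mem_cat => /orP[] /mapP[b' /IH <- ->].
Qed.
Lemma mem_allbits b : b \in allbits (size b).
Proof.
elim: b => [|x b IH] /=; first by rewrite inE.
by rewrite mem_cat; case: x; [rewrite map_f | rewrite orbC map_f].
Qed.
Lemma uniq_allbits N : uniq (allbits N).
Proof.
elim: N => //= N IH; rewrite cat_uniq !map_inj_uniq; try by move=> ? ? [].
rewrite IH /= andbT; apply/hasPn => b /mapP[b' _ ->]; apply/mapP => -[x _ H].
by inversion H.
Qed.
Lemma mbits c N b : measurable [set w | bits c N w = b].
Proof.
have [sb|sb] := eqVneq (size b) N.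
  rewrite bitsE //; apply: bigsetI_measurable => i _.
  exact: (measurable_funPTI (X i) (mBset _ _)).
rewrite (_ : [set _ | _] = set0) //; apply/seteqP; split => w //= bw.
by move: sb; rewrite -bw size_bits eqxx.
Qed.
Lemma mbits_in c N (s : seq (seq bool)) : measurable [set w | bits c N w \in s].
Proof.
elim: s => [|b s IH].
  by rewrite (_ : [set _ | _] = set0) //; apply/seteqP; split => w //=.
rewrite (_ : [set _ | _] = [set w | bits c N w = b] `|` [set w | bits c N w \in s]).
  exact: measurableU (mbits _ _ _) IH.
apply/seteqP; split => w /=; rewrite inE.
  by move=> /orP[/eqP|]; [left|right].
by move=> [->|->]; rewrite ?eqxx ?orbT.
Qed.
Lemma P_seq c N (s : seq (seq bool)) : uniq s ->
  P [set w | bits c N w \in s] = (\sum_(b <- s) P [set w | bits c N w = b])%E.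
Proof.
elim: s => [|b s IH].
  by rewrite big_nil (_ : [set _ | _] = set0) ?measure0 //; apply/seteqP; split => w //=.
move=> /= /andP[bs us].
rewrite (_ : [set _ | _] = [set w | bits c N w = b] `|` [set w | bits c N w \in s]).
  rewrite measureU.
  - by rewrite big_cons; congr (_ + _); exact: (IH us).
  - exact: mbits.
  - exact: mbits_in.
  - apply/seteqP; split => w //= [bw]; rewrite bw => bs'.
    by move: bs; rewrite bs'.
apply/seteqP; split => w /=; rewrite inE.
  by move=> /orP[/eqP|]; [left|right].
by move=> [->|->]; rewrite ?eqxx ?orbT.
Qed.
Lemma P_event (hI : iid X) c N (Q : pred (seq bool)) :
  P [set w | Q (bits c N w)] = (\sum_(b <- allbits N) wt (pr c) b * (Q b)%:R)%:E.
Proof.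
rewrite (_ : [set _ | _] = [set w | bits c N w \in seq.filter Q (allbits N)]); last first.
  apply/seteqP; split => w /=; rewrite mem_filter.
    by move=> ->; rewrite -{2}(size_bits c N w) mem_allbits.
  by case/andP.
rewrite P_seq ?filter_uniq ?uniq_allbits // big_filter.
rewrite -sumEFin big_mkcond /=.
apply: eq_big_seq => b bin.
case: (Q b); last by rewrite mulr0.
by rewrite mulr1 -(allbits_size bin) prob_bits.
Qed.
Lemma df_le (k : nat) w t t' : t <= t' -> empirical_df X k w t <= empirical_df X k w t'.
Proof.
move=> tt'; rewrite /empirical_df ler_wpM2r ?invr_ge0 ?ler0n //.
apply: ler_sum => i _; case: (leP (X i w) t) => h; last by rewrite ler0n.
by rewrite (le_trans h tt').
Qed.
Definition Mb (k : nat) w : R := \sum_(i < k) `|X i w|.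
Lemma XleM (k : nat) w (i : 'I_k) : `|X i w| <= Mb k w.
Proof. by rewrite /Mb (bigD1 i) //= lerDl sumr_ge0. Qed.
Lemma qset_ne (k : nat) w alpha : (0 < k)%N -> alpha <= 1 ->
  [set t | alpha <= empirical_df X k w t] !=set0.
Proof.
move=> k0 a1; exists (Mb k w) => /=.
rewrite /empirical_df (eq_bigr (fun _ => 1)); last first.
  by move=> i _; rewrite (le_trans (ler_norm _) (XleM _ _)).
by rewrite sumr_const card_ord -[_ *+ _]/(k%:R) divff // pnatr_eq0 -lt0n.
Qed.
Lemma qset_lb (k : nat) w alpha : 0 < alpha ->
  has_lbound [set t | alpha <= empirical_df X k w t].
Proof.
move=> a0; exists (- Mb k w) => t /= H; rewrite leNgt; apply/negP => tM.
move: H; rewrite leNgt => /negP; apply.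
rewrite /empirical_df (eq_bigr (fun _ => 0)) ?big1 ?mul0r //.
move=> i _; case: leP => //= h.
have : - Mb k w <= X i w.
  by rewrite lerNl (le_trans _ (XleM w i)) // -normrN ler_norm.
by move=> /(lt_le_trans tM) /(le_lt_trans h); rewrite ltxx.
Qed.
Lemma Q_lt (k : nat) w alpha b : (0 < k)%N -> alpha <= 1 ->
  empirical_quantile X k alpha w < b -> alpha <= empirical_df X k w b.
Proof.
move=> k0 a1 /(inf_lt (qset_ne w k0 a1)) [y /= Hy yb].
exact: (le_trans Hy (df_le _ _ (ltW yb))).
Qed.
Lemma Q_lb (k : nat) w alpha a : 0 < alpha ->
  alpha <= empirical_df X k w a -> empirical_quantile X k alpha w <= a.
Proof. by move=> a0 H; apply: (ge_inf (qset_lb k w a0)). Qed.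
Definition Sk (c : R) k w : R := \sum_(i < k) (((X i w <= c)%R)%:R).
Lemma mu_bigcup_le (F : nat -> set T) b : (forall N, measurable (F N)) ->
  (forall N, F N `<=` F N.+1) -> (forall N, (P (F N) <= b)%E) -> (P (\bigcup_N F N) <= b)%E.
Proof.
move=> mF FS Fb.
have nd : nondecreasing_seq F.
  by apply/nondecreasing_seqP => N; apply/subsetPset; exact: FS.
have H := nondecreasing_cvg_mu (mu:=P) mF (bigcupT_measurable _ mF) nd.
rewrite -(cvg_lim _ H) //; apply: lime_le; first by apply/cvg_ex; eexists; exact: H.
by apply: nearW => N; exact: Fb.
Qed.
Lemma sum_bits (f : bool -> R) c k w : \sum_(x <- bits c k w) f x = \sum_(i < k) f (X i w <= c).
Proof. by rewrite /bits big_map -(big_mkord xpredT (fun i => f (X i w <= c))) /index_iota subn0. Qed.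
Lemma hit_end (phi : bool -> R) L s b : L <= s + \sum_(x <- b) phi x -> hit phi L s b.
Proof.
elim: b s => [|x b IH] s /=; first by rewrite big_nil addr0.
rewrite big_cons addrA => H; apply/orP; right; exact: IH.
Qed.
Lemma hit_cat (phi : bool -> R) L s b b' : hit phi L s b -> hit phi L s (b ++ b').
Proof.
elim: b s => [|x b IH] s /=; first by case: b' => //= y b' ->.
by move=> /orP[->//|/IH ->]; rewrite orbT.
Qed.
Lemma bitsS c N w : bits c N.+1 w = bits c N w ++ [:: X N w <= c].
Proof. by rewrite /bits -addn1 iotaD map_cat. Qed.
Lemma mQ c N (Q : pred (seq bool)) : measurable [set w | Q (bits c N w)].
Proof.
rewrite (_ : [set _ | _] = [set w | bits c N w \in seq.filter Q (allbits N)]); last first.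
  apply/seteqP; split => w /=; rewrite mem_filter.
    by move=> ->; rewrite -{2}(size_bits c N w) mem_allbits.
  by case/andP.
exact: mbits_in.
Qed.
Lemma tail_bound (hI : iid X) c (sg del : R) (n : nat) : sg * sg = 1 -> 0 <= del ->
  exists H, [/\ measurable H,
    [set w | exists k, (n <= k)%N /\ k%:R * del <= sg * (k%:R * pr c - Sk c k w)] `<=` H &
    (P H <= (expR (- (2 * n%:R * del ^+ 2)))%:E)%E].
Proof.
move=> sg2 del0.
pose lam := 4 * sg * del.
pose phi := fun x : bool => lam * (pr c - x%:R) - 8^-1 * (lam * lam).
pose L := 2 * n%:R * del ^+ 2.
have Esum k w : \sum_(i < k) phi (X i w <= c) = lam * (k%:R * pr c - Sk c k w) - k%:R * (8^-1 * (lam * lam)).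
  rewrite /phi big_split /= -mulr_sumr big_split /= sumrN !sumr_const card_ord /Sk.
  by ring.
exists (\bigcup_N [set w | hit phi L 0 (bits c N w)]); split.
- by apply: bigcupT_measurable => N; exact: mQ.
- move=> w [k [nk H]]; exists k => //=; apply: hit_end.
  rewrite sum_bits add0r Esum.
  set D' := (k%:R * pr c - Sk c k w) in H *.
  have E1 : lam * D' = 4 * del * (sg * D') by rewrite /lam; ring.
  have E2 : lam * lam = 16 * del ^+ 2 * (sg * sg) by rewrite /lam; ring.
  rewrite sg2 mulr1 in E2.
  rewrite E1 E2 /L.
  have nk' : n%:R <= k%:R :> R by rewrite ler_nat.
  set D := sg * D' in H *.
  nra.
- apply: mu_bigcup_le.
  + by move=> N; exact: mQ.
  + move=> N w H.
    rewrite /mkset bitsS; exact: hit_cat.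
  move=> N.
  rewrite (P_event hI c N (hit phi L 0)) lee_fin.
  have -> : - (2 * n%:R * del ^+ 2) = 0 - L by rewrite /L sub0r.
  apply: ville; first exact: pr01.
  have hb := hoeffding_bern lam (pr01 c).
  rewrite /phi /= subr0.
  have e0 := expR_gt0 (8^-1 * (lam * lam)).
  rewrite !expRD !expRN [pr c * (_ / _)]mulrA [(1 - pr c) * (_ / _)]mulrA -mulrDl.
  by rewrite ler_pdivrMr // mul1r.
Qed.
Lemma df_bits k w t : empirical_df X k w t = (\sum_(x <- bits t k w) (x%:R : R)) / k%:R.
Proof. by rewrite sum_bits. Qed.
Lemma mdf_ge alpha k t : measurable [set w | alpha <= empirical_df X k w t].
Proof.
pose Q := fun b : seq bool => alpha <= (\sum_(x <- b) ((x : bool)%:R : R)) / k%:R.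
rewrite (_ : [set _ | _] = [set w | Q (bits t k w)]); first exact: mQ.
by apply/seteqP; split => w /=; rewrite /Q df_bits.
Qed.
Lemma mdf_lt alpha k t : measurable [set w | empirical_df X k w t < alpha].
Proof.
pose Q := fun b : seq bool => (\sum_(x <- b) ((x : bool)%:R : R)) / k%:R < alpha.
rewrite (_ : [set _ | _] = [set w | Q (bits t k w)]); first exact: mQ.
by apply/seteqP; split => w /=; rewrite /Q df_bits.
Qed.
Lemma main_bound (hI : iid X) alpha qa x del n :
  0 < alpha <= 1 -> (0 < n)%N -> 0 <= del ->
  del <= pr (qa + x) - alpha -> del <= alpha - pr (qa - x) ->
  (P [set w | (x%:E < ereal_sup [set (`|empirical_quantile X k alpha w - qa|)%:E | k in [set k | (n <= k)%N]])%E]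
     <= (2 * expR (- (2 * n%:R * del ^+ 2)))%:E)%E.
Proof.
move=> /andP[a0 a1] n0 del0 d1 d2.
set E := [set w | _].
pose c1 := qa + x. pose c2 := qa - x.
pose A k m := [set w | empirical_df X k w (c1 + m.+1%:R^-1) < alpha].
pose B k m := [set w | alpha <= empirical_df X k w (c2 - m.+1%:R^-1)].
pose C k m := if (n <= k)%N then A k m `|` B k m else set0.
have EC : E = \bigcup_k \bigcup_m C k m.
  apply/seteqP; split => w /=.
  - move=> /ereal_sup_gt [_ [k /= nk <-]]; rewrite lte_fin => xQ.
    have k0 : (0 < k)%N := leq_trans n0 nk.
    exists k => //; rewrite /C nk.
    have [Qc1|Qc1] := ltP c1 (empirical_quantile X k alpha w).
    + have [m Hm] := ltr_add_invr Qc1.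
      exists m => //; left; rewrite /A /=; rewrite ltNge; apply/negP => H.
      by move: (Q_lb a0 H); rewrite leNgt Hm.
    + have Qc2 : empirical_quantile X k alpha w < c2.
        move: xQ; rewrite ltr_normr => /orP[xQ|xQ]; rewrite /c1 /c2 in Qc1 *; lra.
      have [m Hm] := ltr_add_invr Qc2.
      exists m => //; right; rewrite /B /=; apply: Q_lt => //.
      by rewrite ltrBrDr.
  - move=> [k _ [m _]]; rewrite /C; case: ifP => // nk Cw.
    have k0 : (0 < k)%N := leq_trans n0 nk.
    have xQ : x < `|empirical_quantile X k alpha w - qa|.
      case: Cw => [Aw|Bw].
      + have Qc1 : c1 < empirical_quantile X k alpha w.
          rewrite ltNge; apply/negP => Qc1.
          have : alpha <= empirical_df X k w (c1 + m.+1%:R^-1).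
            apply: Q_lt => //; apply: (le_lt_trans Qc1).
            by rewrite ltrDl invr_gt0 ltr0n.
          by rewrite leNgt Aw.
        have h : x < empirical_quantile X k alpha w - qa by rewrite /c1 in Qc1; lra.
        exact: lt_le_trans h (ler_norm _).
      + have Qc2 := Q_lb a0 Bw.
        have Qc2' : empirical_quantile X k alpha w < c2.
          by rewrite (le_lt_trans Qc2) // ltrBlDr ltrDl invr_gt0 ltr0n.
        have h : x < - (empirical_quantile X k alpha w - qa) by rewrite /c2 in Qc2'; lra.
        by rewrite -normrN; exact: lt_le_trans h (ler_norm _).
    apply: (lt_le_trans _ (ereal_sup_ubound _)); last by exists k.
    by rewrite lte_fin.
have mE : measurable E.
  rewrite EC; apply: bigcupT_measurable => k; apply: bigcupT_measurable => m.
  rewrite /C; case: ifP => _ //; apply: measurableU; [exact: mdf_lt | exact: mdf_ge].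
have [H1 [mH1 sH1 PH1]] := tail_bound hI (qa + x) n (mulr1 1) del0.
have sg2 : (-1) * (-1) = 1 :> R by rewrite mulrNN mulr1.
have [H2 [mH2 sH2 PH2]] := tail_bound hI (qa - x) n sg2 del0.
have EH : E `<=` H1 `|` H2.
  rewrite EC => w [k _ [m _]]; rewrite /C; case: ifP => // nk [Aw|Bw].
  - left; apply: sH1; exists k; split => //.
    have k0 : 0 < k%:R :> R by rewrite ltr0n (leq_trans n0 nk).
    have : empirical_df X k w c1 < alpha.
      by apply: le_lt_trans Aw; apply: df_le; rewrite lerDl invr_ge0 ler0n.
    rewrite /empirical_df ltr_pdivrMr // -/(Sk c1 k w) => HS.
    rewrite mul1r; nra.
  - right; apply: sH2; exists k; split => //.
    have k0 : 0 < k%:R :> R by rewrite ltr0n (leq_trans n0 nk).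
    have : alpha <= empirical_df X k w c2.
      by apply: le_trans Bw _; apply: df_le; rewrite lerBlDr lerDl invr_ge0 ler0n.
    rewrite /empirical_df ler_pdivlMr // -/(Sk c2 k w) => HS.
    nra.
apply: (le_trans (le_measure _ _ _ EH)); rewrite ?inE //; first exact: measurableU.
apply: (le_trans (measureU2 _ mH1 mH2)).
by rewrite mulr_natl mulr2n EFinD leeD.
Qed.
End prob.
Unset Implicit Arguments. Set Strict Implicit.

Theorem mainTheorem9 (d : measure_display) (T : measurableType d) (R : realType)
  (P : probability T R) (X : nat -> {RV P >-> R}) (alpha qa : R) :
  0 < alpha < 1 ->
  iid X ->
  (forall q, is_quantile (distfun (X 0)) alpha q <-> q = qa) ->
  let F := distfun (X 0) in
  let dd := fun x : R => Num.min (F (qa + x) - alpha) (alpha - F (qa - x)) in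
  (forall x : R, 0 < x -> 0 < dd x) /\
  (forall (n : nat) (x : R), (0 < n)%N -> 0 < x ->
    (P [set w | (x%:E < ereal_sup
          [set (`|empirical_quantile X k alpha w - qa|)%:E | k in [set k | (n <= k)%N]])%E]
     <= (2 * expR (- 2 * n%:R * dd x ^+ 2))%:E)%E).
Proof.
move=> /andP[a0 a1] hI uq F dd.
have ndF : {homo F : x y / x <= y}.
  move=> a b ab; rewrite /F /distfun.
  have fin r : cdf (X 0) r \is a fin_num.
    by rewrite ge0_fin_numE ?cdf_ge0 // (le_lt_trans (cdf_le1 _ _)) // ltry.
  by apply: fine_le; rewrite ?fin //; exact: cdf_nondecreasing.
have ddpos : forall x : R, 0 < x -> 0 < dd x.
  by move=> x x0; have [h1 h2] := dd_pos ndF uq x0; rewrite /dd lt_min h1 h2.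
split => // n x n0 x0.
have del0 := ltW (ddpos x x0).
have -> : - 2 * n%:R * dd x ^+ 2 = - (2 * n%:R * dd x ^+ 2) by rewrite !mulNr.
apply: main_bound => //.
- by rewrite a0 ltW.
- by rewrite /dd ge_min lexx.
- by rewrite /dd ge_min lexx orbT.
Qed.
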